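(* If $C$ is a self-dual code over $\mathbb{Z}_4+u\mathbb{Z}_4$ generated by a matrix of the form $[I_n\,|\,A]$ (with $A$ an $n\times n$ matrix over $\mathbb{Z}_4+u\mathbb{Z}_4$), then $\mu(C)$ is self-dual over $\mathbb{Z}_4$ and $\alpha(C)$ is self-dual over $\mathbb{F}_2+u\mathbb{F}_2$.
   Context: $\mathbb{Z}_4+u\mathbb{Z}_4$ is the commutative ring of characteristic $4$ with $u^2=0$; $\mathbb{F}_2+u\mathbb{F}_2$ is the commutative ring $\{0,1,u,1+u\}$ of characteristic $2$ with $u^2=0$. A linear code over a ring $R$ is an $R$-submodule of $R^N$; duals are taken with respect to the Euclidean inner product $\sum_i x_iy_i$ in $R$; self-dual means $C=C^\perp$. For $\overline{a},\overline{b}\in\mathbb{Z}_4^N$, $\mu(\overline{a}+u\overline{b})=\overline{a}$; $\alpha$ is coordinatewise reduction modulo $2$ from $\mathbb{Z}_4+u\mathbb{Z}_4$ to $\mathbb{F}_2+u\mathbb{F}_2$. *)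

(* Defs.v *)
From HB Require Import structures.
From mathcomp Require Import all_boot all_order all_algebra.
Set Implicit Arguments. Unset Strict Implicit. Unset Printing Implicit Defensive.
Import Order.TTheory GRing.Theory.
Local Open Scope ring_scope.

(* The ring R + uR with u^2 = 0 (dual numbers over R):
   an element is  re + u * du. *)
Record dnum (R : Type) := DNum { dre : R; ddu : R }.
Arguments DNum {R}.

Definition dnum_to_pair (R : Type) (x : dnum R) : R * R := (dre x, ddu x).
Definition dnum_of_pair (R : Type) (p : R * R) : dnum R := DNum p.1 p.2.
Lemma dnum_pairK (R : Type) : cancel (@dnum_to_pair R) (@dnum_of_pair R).
Proof. by case. Qed.

HB.instance Definition _ (R : choiceType) :=
  Choice.copy (dnum R) (can_type (@dnum_pairK R)).
HB.instance Definition _ (R : countType) :=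
  Countable.copy (dnum R) (can_type (@dnum_pairK R)).
HB.instance Definition _ (R : finType) :=
  Finite.copy (dnum R) (can_type (@dnum_pairK R)).

Section DnumRing.
Variable R : comNzRingType.
Implicit Types x y z : dnum R.

Definition dzero : dnum R := DNum 0 0.
Definition dopp x : dnum R := DNum (- dre x) (- ddu x).
Definition dadd x y : dnum R := DNum (dre x + dre y) (ddu x + ddu y).
Definition done : dnum R := DNum 1 0.
(* (a + u b)(c + u d) = ac + u (ad + bc) *)
Definition dmul x y : dnum R :=
  DNum (dre x * dre y) (dre x * ddu y + ddu x * dre y).

Lemma daddA : associative dadd.
Proof. by move=> [a b] [c d] [e f]; rewrite /dadd /= !addrA. Qed.
Lemma daddC : commutative dadd.
Proof. by move=> [a b] [c d]; rewrite /dadd /= (addrC a) (addrC b). Qed.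
Lemma dadd0 : left_id dzero dadd.
Proof. by move=> [a b]; rewrite /dadd /= !add0r. Qed.
Lemma daddN : left_inverse dzero dopp dadd.
Proof. by move=> [a b]; rewrite /dadd /= !addNr. Qed.

HB.instance Definition _ := GRing.isZmodule.Build (dnum R) daddA daddC dadd0 daddN.

Lemma dmulA : associative dmul.
Proof.
move=> [a b] [c d] [e f]; rewrite /dmul /=; congr DNum; first by rewrite mulrA.
by rewrite !mulrDr !mulrDl !mulrA addrA.
Qed.
Lemma dmulC : commutative dmul.
Proof.
by move=> [a b] [c d]; rewrite /dmul /= mulrC addrC (mulrC a d) (mulrC b c).
Qed.
Lemma dmul1 : left_id done dmul.
Proof. by move=> [a b]; rewrite /dmul /= !mul1r mul0r addr0. Qed.
Lemma dmulDl : left_distributive dmul dadd.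
Proof.
move=> [a b] [c d] [e f]; rewrite /dmul /dadd /=; congr DNum; first by rewrite mulrDl.
by rewrite !mulrDl addrACA.
Qed.
Lemma done_neq0 : done != dzero.
Proof. by apply/negP => /eqP[] /eqP; rewrite oner_eq0. Qed.

HB.instance Definition _ :=
  GRing.Zmodule_isComNzRing.Build (dnum R) dmulA dmulC dmul1 dmulDl done_neq0.
End DnumRing.

Definition Z4u := dnum 'Z_4.
HB.instance Definition _ := Finite.on Z4u.
HB.instance Definition _ := GRing.ComNzRing.on Z4u.
Definition F2u := dnum 'Z_2.
HB.instance Definition _ := Finite.on F2u.
HB.instance Definition _ := GRing.ComNzRing.on F2u.

Section Codes.
Variable R : finComNzRingType.
Variable N : nat.

Definition eucl (x y : 'rV[R]_N) : R := \sum_(i < N) x 0 i * y 0 i.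

Definition dual_code (C : {set 'rV[R]_N}) : {set 'rV[R]_N} :=
  [set y | [forall x in C, eucl x y == 0]].

Definition self_dual (C : {set 'rV[R]_N}) : Prop := C = dual_code C.
End Codes.

Definition gen_code (R : finComNzRingType) (k N : nat) (G : 'M[R]_(k, N))
  : {set 'rV[R]_N} := [set v *m G | v : 'rV[R]_k].

Definition mu_code (N : nat) (C : {set 'rV[Z4u]_N}) : {set 'rV['Z_4]_N} :=
  [set map_mx (@dre _) c | c in C].

Definition red2 (a : 'Z_4) : 'Z_2 := inZp (nat_of_ord a).
Definition alpha_elt (z : Z4u) : F2u := DNum (red2 (dre z)) (red2 (ddu z)).
Definition alpha_code (N : nat) (C : {set 'rV[Z4u]_N}) : {set 'rV[F2u]_N} :=
  [set map_mx alpha_elt c | c in C].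

(* Main.v *)
Require Import Defs.
From HB Require Import structures.
From mathcomp Require Import all_boot all_order all_algebra.
Local Open Scope ring_scope.
Set Implicit Arguments. Unset Strict Implicit. Unset Printing Implicit Defensive.
Import GRing.Theory.


Lemma red2B (x y : 'Z_4) : red2 (x - y) = red2 x - red2 y.
Proof. by move: x y => [[|[|[|[|x]]]] ?] [[|[|[|[|y]]]] ?] //=; apply/val_inj. Qed.
Lemma red2D (x y : 'Z_4) : red2 (x + y) = red2 x + red2 y.
Proof. by move: x y => [[|[|[|[|x]]]] ?] [[|[|[|[|y]]]] ?] //=; apply/val_inj. Qed.
Lemma red2M (x y : 'Z_4) : red2 (x * y) = red2 x * red2 y.
Proof. by move: x y => [[|[|[|[|x]]]] ?] [[|[|[|[|y]]]] ?] //=; apply/val_inj. Qed.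

Lemma al_add : zmod_morphism alpha_elt.
Proof. by move=> [a b] [c d]; rewrite /alpha_elt /= !red2B. Qed.
Lemma al_mul : monoid_morphism alpha_elt.
Proof.
split; first by rewrite /alpha_elt /=; congr DNum; apply/val_inj.
by move=> [a b] [c d]; rewrite /alpha_elt /= !red2D !red2M.
Qed.
HB.instance Definition _ := GRing.isZmodMorphism.Build Z4u F2u alpha_elt al_add.
HB.instance Definition _ := GRing.isMonoidMorphism.Build Z4u F2u alpha_elt al_mul.




Section Gen.
Variable R : finComNzRingType.

Lemma euclE N (x y : 'rV[R]_N) : eucl x y = (x *m y^T) 0 0.
Proof. by rewrite /eucl !mxE; apply: eq_bigr => j _; rewrite mxE. Qed.

Lemma GGT n (B : 'M[R]_n) :
  row_mx 1%:M B *m (row_mx 1%:M B)^T = 1%:M + B *m B^T.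
Proof. by rewrite tr_row_mx mul_row_col trmx1 mulmx1. Qed.

Lemma entryE n m (M : 'M[R]_(n, m)) (i : 'I_n) (j : 'I_m) :
  ((delta_mx 0 i : 'rV[R]_n) *m M *m (delta_mx 0 j : 'rV[R]_m)^T) 0 0 = M i j.
Proof. by rewrite trmx_delta -rowE -colE !mxE. Qed.

Lemma sd_cond n (B : 'M[R]_n) :
  self_dual (gen_code (row_mx 1%:M B)) -> B *m B^T = - 1%:M.
Proof.
set G := row_mx 1%:M B => sd.
have H0 : G *m G^T = 0.
  apply/matrixP => i j; rewrite [RHS]mxE -entryE !mulmxA.
  have yC : delta_mx 0 j *m G \in gen_code G by apply/imsetP; exists (delta_mx 0 j).
  have xC : delta_mx 0 i *m G \in gen_code G by apply/imsetP; exists (delta_mx 0 i).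
  move: yC; rewrite {1}sd inE => /forallP /(_ (delta_mx 0 i *m G)) /implyP /(_ xC).
  by rewrite euclE trmx_mul !mulmxA => /eqP.
by apply/eqP; move: H0; rewrite GGT addrC => /eqP; rewrite addr_eq0.
Qed.

Lemma cond_sd n (B : 'M[R]_n) :
  B *m B^T = - 1%:M -> self_dual (gen_code (row_mx 1%:M B)).
Proof.
set G := row_mx 1%:M B => BB.
have BtB : B^T *m B = - 1%:M.
  have h : B *m (- B^T) = 1%:M by rewrite mulmxN BB opprK.
  by move/mulmx1C: h; rewrite mulNmx => /eqP; rewrite eqr_oppLR => /eqP.
have H0 : G *m G^T = 0 by rewrite GGT BB addrN.
apply/setP => y; apply/idP/idP.
  case/imsetP => v _ ->; rewrite inE; apply/forallP => x; apply/implyP.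
  case/imsetP => u _ ->; rewrite euclE trmx_mul !mulmxA -(mulmxA u) H0 mulmx0 mul0mx mxE.
  by [].
rewrite inE => /forallP Hy.
have HG : y *m G^T = 0.
  apply/matrixP => i j; rewrite [i]ord1 [RHS]mxE.
  have xC : delta_mx 0 j *m G \in gen_code G by apply/imsetP; exists (delta_mx 0 j).
  move: (Hy (delta_mx 0 j *m G)) => /implyP /(_ xC); rewrite euclE -mulmxA -rowE mxE => /eqP <-.
  by rewrite -[y *m G^T]trmxK trmx_mul trmxK mxE.
rewrite -[y]hsubmxK in HG *.
move: HG; rewrite /G tr_row_mx mul_row_col trmx1 mulmx1 => /eqP; rewrite addr_eq0 => /eqP E.
apply/imsetP; exists (lsubmx y) => //.
by rewrite mul_mx_row mulmx1 E mulNmx -mulmxA BtB mulmxN mulmx1 opprK.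
Qed.

Lemma transfer (S : finComNzRingType) (f : {rmorphism R -> S}) (g : S -> R)
  (fK : cancel g f) n (A : 'M[R]_n) :
  [set map_mx f c | c in gen_code (row_mx 1%:M A)] = gen_code (row_mx 1%:M (map_mx f A)).
Proof.
apply/setP => y; apply/imsetP/imsetP.
  case=> c /imsetP [v _ ->] ->; exists (map_mx f v) => //.
  by rewrite map_mxM map_row_mx map_mx1.
case=> v _ ->; exists (map_mx g v *m row_mx 1%:M A); first by apply/imsetP; exists (map_mx g v).
rewrite map_mxM map_row_mx map_mx1; congr (_ *m _).
by apply/matrixP => i j; rewrite !mxE fK.
Qed.

Lemma transfer_cond (S : finComNzRingType) (f : {rmorphism R -> S}) n (A : 'M[R]_n) :
  A *m A^T = - 1%:M -> map_mx f A *m (map_mx f A)^T = - 1%:M.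
Proof. by move=> h; rewrite map_trmx -map_mxM h map_mxN map_mx1. Qed.
End Gen.

Definition mu_elt (z : Z4u) : 'Z_4 := dre z.
Lemma mu_add : zmod_morphism mu_elt. Proof. by case=> a b [c d]. Qed.
Lemma mu_mul : monoid_morphism mu_elt. Proof. by split=> // [[a b] [c d]]. Qed.
HB.instance Definition _ := GRing.isZmodMorphism.Build Z4u 'Z_4 mu_elt mu_add.
HB.instance Definition _ := GRing.isMonoidMorphism.Build Z4u 'Z_4 mu_elt mu_mul.

Lemma mu_sec : cancel (fun a : 'Z_4 => (DNum a 0 : Z4u)) mu_elt.
Proof. by []. Qed.

Lemma red2_sec (a : 'Z_2) : red2 (inZp a) = a.
Proof. by move: a => [[|[|a]] ?] //=; apply/val_inj. Qed.

Lemma al_sec : cancel (fun z : F2u => (DNum (inZp (dre z)) (inZp (ddu z)) : Z4u)) alpha_elt.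
Proof. by case=> a b; rewrite /alpha_elt /= !red2_sec. Qed.

Theorem corollary4p5 (n : nat) (A : 'M[Z4u]_n) :
  self_dual (gen_code (row_mx 1%:M A)) ->
  self_dual (mu_code (gen_code (row_mx 1%:M A))) /\
  self_dual (alpha_code (gen_code (row_mx 1%:M A))).
Proof.
move=> sd; have h := sd_cond sd; split.
  have -> : mu_code (gen_code (row_mx 1%:M A)) = gen_code (row_mx 1%:M (map_mx mu_elt A)).
    exact: (transfer mu_sec).
  exact/cond_sd/transfer_cond.
have -> : alpha_code (gen_code (row_mx 1%:M A)) = gen_code (row_mx 1%:M (map_mx alpha_elt A)).
  exact: (transfer al_sec).
exact/cond_sd/transfer_cond.
Qed.
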